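(* Let $q\ge 2$ and $n\ge 1$. If a quasi-complementary Lee metric Gray code of $q$-ary $n$-tuples exists, then $n$ is even, or $q$ is odd, or $n=1$.
   Context: The Lee distance between $v,u\in\mathbb{Z}_q^n$ is $\sum_{i=1}^n \min\{|v_i-u_i|,\,q-|v_i-u_i|\}$ (entries regarded as integers in $\{0,\ldots,q-1\}$). A quasi-complementary Lee metric Gray code of $q$-ary $n$-tuples is an ordering $G(0),\ldots,G(q^n-1)$ of all $q^n$ words of $\mathbb{Z}_q^n$ such that consecutive words $G(i),G(i+1)$ ($0\le i<q^n-1$) have Lee distance $1$, and $G((i+q^{n-1})\bmod q^n)=G(i)+(1,1,\ldots,1)$ for all $i$, with addition of words in $\mathbb{Z}_q^n$. *)

(* Defs.v *)
From mathcomp Require Import all_boot all_order.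
Set Implicit Arguments. Unset Strict Implicit. Unset Printing Implicit Defensive.

Definition word (q n : nat) := {ffun 'I_n -> 'I_q}.

Definition lee_coord (q a b : nat) : nat :=
  let d := if a <= b then b - a else a - b in minn d (q - d).

Definition lee_dist (q n : nat) (v u : word q n) : nat :=
  \sum_(i < n) lee_coord q (v i) (u i).

Definition add_ones (q n : nat) (v : word q n) : word q n :=
  [ffun i => Ordinal (ltn_pmod (v i).+1 (leq_ltn_trans (leq0n _) (ltn_ord (v i))))].

(* A quasi-complementary Lee metric Gray code: an ordering G(0..q^n-1) of all
   words (a bijection 'I_(q^n) -> word q n) such that consecutive words are at
   Lee distance 1 and G((i + q^(n-1)) mod q^n) = G(i) + (1,...,1). *)
Definition qc_lee_gray_code (q n : nat) (G : 'I_(q ^ n) -> word q n) : Prop :=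
  bijective G /\
  (forall i j : 'I_(q ^ n), j = i.+1 :> nat -> lee_dist (G i) (G j) = 1) /\
  (forall i j : 'I_(q ^ n), j = (i + q ^ n.-1) %% q ^ n :> nat ->
      G j = add_ones (G i)).

(* Main.v *)
Require Import Defs.
From mathcomp Require Import all_boot all_order.

Definition S {q n : nat} (v : word q n) : nat := \sum_(i < n) (v i : nat).

Lemma odd_big (n : nat) (f g : 'I_n -> nat) :
  (forall i, odd (f i) = odd (g i)) -> odd (\sum_i f i) = odd (\sum_i g i).
Proof.
move=> H; apply: (big_ind2 (fun x y => odd x = odd y)) => //.
by move=> a b c d E1 E2; rewrite !oddD E1 E2.
Qed.

Lemma lee_odd q a b : ~~ odd q -> a < q -> b < q ->
  odd (lee_coord q a b) = odd (a + b).
Proof.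
move=> hq ha hb; rewrite /lee_coord.
case: (leqP a b) => h.
  have hd : b - a <= q by rewrite (leq_trans (leq_subr _ _)) // ltnW.
  rewrite /minn; case: ifP => _.
    by rewrite oddB // oddD addbC.
  by rewrite oddB // oddB // oddD (negbTE hq) /= addbC.
have hd : a - b <= q by rewrite (leq_trans (leq_subr _ _)) // ltnW.
have h' : b <= a by apply: ltnW.
rewrite /minn; case: ifP => _.
  by rewrite oddB // oddD.
by rewrite oddB // oddB // oddD (negbTE hq).
Qed.

Lemma lee_step q n (v u : word q n) : ~~ odd q -> lee_dist v u = 1 ->
  odd (S v + S u).
Proof.
move=> hq H; rewrite /S -big_split /=.
rewrite (@odd_big _ _ (fun i => lee_coord q (v i) (u i))).
  by move: H; rewrite /lee_dist => ->.
by move=> i; rewrite lee_odd.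
Qed.

Lemma add_ones_odd q n (v : word q n) i : ~~ odd q ->
  odd (add_ones v i) = ~~ odd (v i).
Proof.
move=> hq; rewrite ffunE /=.
case: (ltnP (v i).+1 q) => h.
  by rewrite modn_small.
have E : (v i).+1 = q by apply/eqP; rewrite eqn_leq h ltn_ord.
have Eq : odd (v i).+1 = odd q by rewrite E.
by rewrite [(v i).+1]E modnn /= -(negbK (odd (v i))) -oddS Eq (negbTE hq).
Qed.

Lemma add_ones_S q n (v : word q n) : ~~ odd q ->
  odd (S (add_ones v) + S v) = odd n.
Proof.
move=> hq; rewrite /S -big_split /=.
rewrite (@odd_big _ _ (fun i => 1)).
  by rewrite sum1_card card_ord.
by move=> i; rewrite oddD add_ones_odd //; case: (odd _).
Qed.

Theorem proposition1 (q n : nat) (hq : 2 <= q) (hn : 1 <= n) :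
  (exists G : 'I_(q ^ n) -> word q n, qc_lee_gray_code G) ->
  ~~ odd n \/ odd q \/ n = 1.
Proof.
move=> [G [_ [Hc Hq]]].
case: (boolP (odd q)) => oq; first by right; left.
case: (boolP (odd n)) => on; last by left.
case: (eqVneq n 1) => n1; first by right; right.
exfalso.
have qn0 : 0 < q ^ n by rewrite expn_gt0 (leq_trans _ hq).
pose G0 := G (Ordinal qn0).
have Hi : forall i (hi : i < q ^ n), odd (S (G (Ordinal hi)) + S G0) = odd i.
  elim=> [|i IH] hi.
    by rewrite /G0 (_ : Ordinal hi = Ordinal qn0) ?oddD ?addbb //; apply: val_inj.
  have hi' : i < q ^ n by apply: ltnW.
  have := @lee_step _ _ _ _ oq (Hc (Ordinal hi') (Ordinal hi) erefl).
  have := IH hi'.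
  rewrite !oddD /= => <-.
  by case: (odd (S (G (Ordinal hi)))); case: (odd (S (G (Ordinal hi'))));
     case: (odd (S G0)).
have hlt : q ^ n.-1 < q ^ n.
  by rewrite ltn_exp2l // prednK // leq_pred.
have := Hi _ hlt.
have -> : G (Ordinal hlt) = add_ones G0.
  apply: Hq => /=. by rewrite add0n modn_small.
rewrite add_ones_S // on.
rewrite oddX (negbTE oq) orbF.
by move: n1 hn; case: (n) => [|[|m]].
Qed.
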